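(* For any $w, w' \in \mathcal{C}\langle A \rangle$ and any integer $M \ge 1$, \[ Z^{\mathcal{S}, \mathrm{sh}}_{q, M}(w \,\mathrm{sh}_{\hbar}\, w')=Z^{\mathcal{S}, \mathrm{sh}}_{q, M}\bigl(w \, \psi^{\mathrm{sh}}(w')\bigr), \] where $w\,\psi^{\mathrm{sh}}(w')$ denotes the concatenation product in $\mathcal{C}\langle A\rangle$.
   Context: Let $\mathcal{C}=\mathbb{Q}[\hbar]$ with $\hbar$ a formal variable, and let $\mathfrak{H}=\mathcal{C}\langle a,b\rangle$ be the non-commutative polynomial ring in $a,b$ over $\mathcal{C}$. For $k\ge 1$ put $g_k=ba^k$. Let $A=\{\hbar b\}\cup\{ba^k\mid k\ge 1\}$, let $\mathcal{C}\langle A\rangle$ be the $\mathcal{C}$-subalgebra of $\mathfrak{H}$ generated by $1$ and $A$, and let $\mathfrak{z}$ be the $\mathcal{C}$-span of $A$. Fix $q\in\mathbb{C}$ with $0<|q|<1$ and regard $\mathbb{C}$ as a $\mathcal{C}$-module with $\hbar$ acting as multiplication by $1-q$. Let $[m]=(1-q^m)/(1-q)$. For $m\ge 1$ let $F_q(m;\cdot):\mathfrak{z}\to\mathbb{C}$ be the $\mathcal{C}$-linear map with $F_q(m;\hbar b)=1-q$ and $F_q(m;g_k)=q^{km}/[m]^k$ for $k\ge1$. For $M\ge 1$ let $Z_{q,M}:\mathcal{C}\langle A\rangle\to\mathbb{C}$ be the $\mathcal{C}$-linear map with $Z_{q,M}(1)=1$ and $Z_{q,M}(u_1\cdots u_r)=\sum_{0<m_1<\cdots<m_r<M}\prod_{i=1}^r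 F_q(m_i;u_i)$ for $u_1,\dots,u_r\in A$. The shuffle product $\mathrm{sh}_\hbar$ on $\mathfrak{H}$ (written infix) is the $\mathcal{C}$-bilinear product determined by $w\,\mathrm{sh}_\hbar\,1=1\,\mathrm{sh}_\hbar\,w=w$, $wa\,\mathrm{sh}_\hbar\,w'a=(wa\,\mathrm{sh}_\hbar\,w'+w\,\mathrm{sh}_\hbar\,w'a+\hbar\,(w\,\mathrm{sh}_\hbar\,w'))a$ and $wb\,\mathrm{sh}_\hbar\,w'=w\,\mathrm{sh}_\hbar\,w'b=(w\,\mathrm{sh}_\hbar\,w')b$ for all $w,w'\in\mathfrak{H}$; $\mathcal{C}\langle A\rangle$ is closed under it. Let $\psi^{\mathrm{sh}}$ be the $\mathcal{C}$-algebra anti-involution of $\mathcal{C}\langle A\rangle$ with $\psi^{\mathrm{sh}}(\hbar b)=\hbar b$ and $\psi^{\mathrm{sh}}(ba^k)=b(-a-\hbar)^k$ for $k\ge1$. Define the $\mathcal{C}$-linear map $w^{\mathcal{S},\mathrm{sh}}_\hbar:\mathcal{C}\langle A\rangle\to\mathcal{C}\langle A\rangle$ by $w^{\mathcal{S},\mathrm{sh}}_\hbar(1)=1$ and $w^{\mathcal{S},\mathrm{sh}}_\hbar(u_1\cdots u_r)=\sum_{i=0}^r (u_1\cdots u_i)\,\mathrm{sh}_\hbar\, \psi^{\mathrm{sh}}(u_{i+1}\cdots u_r)$ for $r\ge1$, $u_1,\dots,u_r\in A$, and set $Z^{\mathcal{S},\mathrm{sh}}_{q,M}=Z_{q,M}\circ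 w^{\mathcal{S},\mathrm{sh}}_\hbar$. *)

(* Defs.v *)
From HB Require Import structures.
From mathcomp Require Import all_boot all_algebra.
From mathcomp Require Import reals complex.
Set Implicit Arguments. Unset Strict Implicit. Unset Printing Implicit Defensive.
Import GRing.Theory Num.Theory.
Local Open Scope ring_scope.

(* ---------- The algebra H = C<a,b>, C = Q[hbar] = {poly rat} (hbar = 'X) ---------- *)
Inductive letter := La | Lb.
Definition letter_eqb (x y : letter) : bool :=
  match x, y with La, La | Lb, Lb => true | _, _ => false end.
Lemma letter_eqP : Equality.axiom letter_eqb.
Proof. by case; case; constructor. Qed.
HB.instance Definition _ := hasDecEq.Build letter letter_eqP.

Definition word := seq letter.

(* An element of H is represented by a formal (finite) C-linear combination of
   words: the list [:: (c1, w1); ...; (cn, wn)] stands for c1 w1 + ... + cn wn.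
   All maps below are defined term-wise, i.e. as the C-(bi)linear extensions
   of their values on words, hence they depend only on the represented element. *)
Definition hpoly := seq ({poly rat} * word).

Definition hone : hpoly := [:: (1, [::])].
Definition hscale (c : {poly rat}) (p : hpoly) : hpoly :=
  [seq (c * t.1, t.2) | t <- p].
Definition hmul (p p' : hpoly) : hpoly :=
  flatten [seq [seq (t.1 * t'.1, t.2 ++ t'.2) | t' <- p'] | t <- p].

(* prepend a letter; used on reversed words (head = last letter) *)
Definition hcons (x : letter) (p : hpoly) : hpoly := [seq (t.1, x :: t.2) | t <- p].

(* shr u v = rev-image of (rev u) sh (rev v): words are given reversed *)
Fixpoint shr (u : word) : word -> hpoly :=
  match u with
  | [::] => fun v => [:: (1, v)]
  | x :: u' =>
    fix shr_in (v : word) : hpoly :=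
      match v with
      | [::] => [:: (1, u)]
      | y :: v' =>
        match x, y with
        | Lb, _ => hcons Lb (shr u' v)                (* wb sh w' = (w sh w')b *)
        | La, Lb => hcons Lb (shr_in v')              (* w sh w'b = (w sh w')b *)
        | La, La =>                                   (* wa sh w'a *)
            hcons La (shr_in v' ++ shr u' v ++ hscale 'X (shr u' v'))
        end
      end
  end.

Definition sh_word (u v : word) : hpoly :=
  [seq (t.1, rev t.2) | t <- shr (rev u) (rev v)].

Definition hsh (p p' : hpoly) : hpoly :=
  flatten [seq flatten [seq hscale (t.1 * t'.1) (sh_word t.2 t'.2) | t' <- p'] | t <- p].

(* dec w = (l, [:: k1; ...; kr]) iff w = a^l b a^k1 ... b a^kr *)
Fixpoint dec (w : word) : nat * seq nat :=
  match w with
  | [::] => (0%N, [::])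
  | La :: w' => ((dec w').1.+1, (dec w').2)
  | Lb :: w' => (0%N, (dec w').1 :: (dec w').2)
  end.

(* w is empty or begins with b *)
Definition binit (w : word) : bool := (dec w).1 == 0%N.
(* number of blocks b a^0 = b, i.e. of letters hbar*b needed *)
Definition n0 (w : word) : nat := count (pred1 0%N) (dec w).2.

Definition block_word (ks : seq nat) : word := flatten [seq Lb :: nseq k La | k <- ks].

(* membership in C<A>: every term c*w has w = u_1...u_r (u_i = b or b a^k, k>=1)
   and hbar^(number of u_i equal to b) divides c, so that c*w is a C-multiple
   of a word in A = {hbar b} U {b a^k | k >= 1}. *)
Definition inCA (p : hpoly) : bool :=
  all (fun t => binit t.2 && ('X ^+ n0 t.2 %| t.1)) p.

(* psi(b a^k) = b (-a-hbar)^k for k >= 1; on the letter hbar b, psi(hbar b) = hbar b,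
   which (by C-linearity) is encoded by the block b a^0 |-> b. *)
Definition psi_block (k : nat) : hpoly :=
  hmul [:: (1, [:: Lb])] (iter k (fun p => hmul p [:: (-1, [:: La]); (- 'X, [::])]) hone).
Definition psi_blocks (ks : seq nat) : hpoly :=
  foldr (fun k acc => hmul acc (psi_block k)) hone ks.
Definition psi (p : hpoly) : hpoly :=
  flatten [seq if binit t.2 then hscale t.1 (psi_blocks (dec t.2).2) else [::] | t <- p].

Definition wS_blocks (ks : seq nat) : hpoly :=
  flatten [seq hsh [:: (1, block_word (take i ks))] (psi_blocks (drop i ks))
          | i <- iota 0 (size ks).+1].
Definition wS (p : hpoly) : hpoly :=
  flatten [seq if binit t.2 then hscale t.1 (wS_blocks (dec t.2).2) else [::] | t <- p].

Local Open Scope complex_scope.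

Inductive Aletter := hbar_b | g of nat.   (* g k = b a^k, k >= 1 *)
Definition toA (k : nat) : Aletter := if k == 0%N then hbar_b else g k.

Section Zq.
Variables (R : realType) (q : R[i]).

Definition qint (m : nat) : R[i] := (1 - q ^+ m) / (1 - q).

Definition Fq (m : nat) (u : Aletter) : R[i] :=
  match u with
  | hbar_b => 1 - q
  | g k => q ^+ (k * m) / qint m ^+ k
  end.

Fixpoint Zfrom (M lo : nat) (us : seq Aletter) : R[i] :=
  match us with
  | [::] => 1
  | u :: us' => \sum_(lo.+1 <= m < M) Fq m u * Zfrom M m us'
  end.

Definition ZA (M : nat) (us : seq Aletter) : R[i] := Zfrom M 0 us.

(* hbar acts on C as multiplication by 1 - q *)
Definition evh (c : {poly rat}) : R[i] := (map_poly ratr c).[1 - q].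

(* Z_{q,M} on C<A>, extended C-linearly: a term c*w with w = u_1...u_r (blocks)
   equals (c / hbar^n0) * (A-word), so Z(c*w) = ev(c) (1-q)^(-n0) Z(A-word);
   this agrees with Z_{q,M} on every element of C<A> (1 - q != 0). *)
Definition Zq (M : nat) (p : hpoly) : R[i] :=
  \sum_(t <- p) if binit t.2
                then evh t.1 / (1 - q) ^+ n0 t.2 * ZA M (map toA (dec t.2).2)
                else 0.

Definition ZSsh (M : nat) (p : hpoly) : R[i] := Zq M (wS p).
End Zq.

(* Main.v *)
Require Import Defs.
From mathcomp Require Import all_boot all_algebra.
From mathcomp Require Import reals complex.
From mathcomp Require Import ring zify.
Import GRing.Theory Num.Theory.
Local Open Scope ring_scope.

Section Main.
Variables (R : realType) (q : R[i]).

Definition ev (c : {poly rat}) : R[i] := evh q c.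
Lemma evM (a b : {poly rat}) : ev (a * b) = ev a * ev b.
Proof. by rewrite /ev /evh rmorphM /= hornerM. Qed.
Lemma evD (a b : {poly rat}) : ev (a + b) = ev a + ev b.
Proof. by rewrite /ev /evh rmorphD /= hornerD. Qed.
Lemma evN (a : {poly rat}) : ev (- a) = - ev a.
Proof. by rewrite /ev /evh rmorphN /= hornerN. Qed.
Lemma ev1 : ev 1 = 1.
Proof. by rewrite /ev /evh rmorph1 hornerC. Qed.

Definition L (g : word -> R[i]) (p : hpoly) : R[i] := \sum_(t <- p) ev t.1 * g t.2.

Lemma L_nil g : L g [::] = 0. Proof. by rewrite /L big_nil. Qed.
Lemma L_cons g t p : L g (t :: p) = ev t.1 * g t.2 + L g p.
Proof. by rewrite /L big_cons. Qed.
Lemma L_cat g p p' : L g (p ++ p') = L g p + L g p'.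
Proof. by rewrite /L big_cat. Qed.
Lemma L_flatten g (s : seq hpoly) : L g (flatten s) = \sum_(p <- s) L g p.
Proof. by elim: s => [|p s IH]; rewrite ?big_nil ?big_cons /= ?L_nil // L_cat IH. Qed.
Lemma L1 g c w : L g [:: (c, w)] = ev c * g w.
Proof. by rewrite L_cons L_nil addr0. Qed.
Lemma L_hone g : L g hone = g [::].
Proof. by rewrite /hone L1 ev1 mul1r. Qed.
Lemma eq_L f h p : (forall w, f w = h w) -> L f p = L h p.
Proof. by move=> e; rewrite /L; apply: eq_bigr => t _; rewrite e. Qed.
Lemma L_add f h p : L (fun w => f w + h w) p = L f p + L h p.
Proof. by rewrite /L -big_split; apply: eq_bigr => t _; rewrite mulrDr. Qed.
Lemma L_scal c f p : L (fun w => c * f w) p = c * L f p.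
Proof. by rewrite /L big_distrr; apply: eq_bigr => t _ /=; rewrite mulrCA. Qed.
Lemma L_opp f p : L (fun w => - f w) p = - L f p.
Proof. by rewrite /L -sumrN; apply: eq_bigr => t _; rewrite mulrN. Qed.
Lemma L_zero p : L (fun _ => 0) p = 0.
Proof. by rewrite /L big1 // => t _; rewrite mulr0. Qed.
Lemma L_map g (h : word -> word) p : L g [seq (t.1, h t.2) | t <- p] = L (fun w => g (h w)) p.
Proof. by rewrite /L big_map. Qed.
Lemma L_scale g c p : L g (hscale c p) = ev c * L g p.
Proof.
rewrite /hscale /L big_map big_distrr; apply: eq_bigr => t _ /=.
by rewrite evM mulrA.
Qed.
Lemma L_hmul g p p' : L g (hmul p p') = L (fun u => L (fun v => g (u ++ v)) p') p.
Proof.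
rewrite /hmul L_flatten big_map; apply: eq_bigr => t _.
rewrite /L big_map big_distrr; apply: eq_bigr => t' _ /=.
by rewrite evM mulrA.
Qed.
Lemma L_hsh g p p' : L g (hsh p p') = L (fun u => L (fun v => L g (sh_word u v)) p') p.
Proof.
rewrite /hsh L_flatten big_map; apply: eq_bigr => t _.
rewrite L_flatten big_map /L big_distrr; apply: eq_bigr => t' _ /=.
by rewrite -/(L _ _) L_scale evM mulrA.
Qed.

Definition rcw (c : letter) (p : hpoly) : hpoly := [seq (t.1, rcons t.2 c) | t <- p].

Lemma shr_nil_r u : shr u [::] = [:: (1, u)].
Proof. by case: u. Qed.
Lemma shr_b1 ru rv : shr (Lb :: ru) rv = hcons Lb (shr ru rv).
Proof. by case: rv => [|y rv] //=; rewrite shr_nil_r. Qed.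
Lemma shr_b2 ru rv : shr ru (Lb :: rv) = hcons Lb (shr ru rv).
Proof.
elim: ru => [|[] ru IH] //=.
by rewrite IH -shr_b1.
Qed.
Lemma shr_aa ru rv : shr (La :: ru) (La :: rv) =
  hcons La (shr (La :: ru) rv ++ shr ru (La :: rv) ++ hscale 'X (shr ru rv)).
Proof. by []. Qed.

Definition mrev (p : hpoly) : hpoly := [seq (t.1, rev t.2) | t <- p].
Lemma mrev_hcons c p : mrev (hcons c p) = rcw c (mrev p).
Proof. by rewrite /mrev /rcw /hcons -!map_comp; apply: eq_map => t /=; rewrite rev_cons. Qed.
Lemma mrev_cat p p' : mrev (p ++ p') = mrev p ++ mrev p'.
Proof. by rewrite /mrev map_cat. Qed.
Lemma mrev_scale c p : mrev (hscale c p) = hscale c (mrev p).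
Proof. by rewrite /mrev /hscale -!map_comp. Qed.
Lemma sh_wordE u v : sh_word u v = mrev (shr (rev u) (rev v)).
Proof. by []. Qed.

Lemma sh_nil_l v : sh_word [::] v = [:: (1, v)].
Proof. by rewrite sh_wordE /= revK. Qed.
Lemma sh_nil_r u : sh_word u [::] = [:: (1, u)].
Proof. by rewrite sh_wordE shr_nil_r /= revK. Qed.
Lemma sh_b_l u v : sh_word (rcons u Lb) v = rcw Lb (sh_word u v).
Proof. by rewrite !sh_wordE rev_rcons shr_b1 mrev_hcons. Qed.
Lemma sh_b_r u v : sh_word u (rcons v Lb) = rcw Lb (sh_word u v).
Proof. by rewrite !sh_wordE rev_rcons shr_b2 mrev_hcons. Qed.
Lemma sh_aa u v : sh_word (rcons u La) (rcons v La) =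
  rcw La (sh_word (rcons u La) v ++ sh_word u (rcons v La) ++ hscale 'X (sh_word u v)).
Proof.
by rewrite !sh_wordE !rev_rcons shr_aa mrev_hcons !mrev_cat mrev_scale.
Qed.

Lemma L_rcw g c p : L g (rcw c p) = L (fun w => g (rcons w c)) p.
Proof. exact: (L_map g (fun w => rcons w c) p). Qed.

Lemma sh_comm_n n : forall u v g, (size u + size v <= n)%N ->
  L g (sh_word u v) = L g (sh_word v u).
Proof.
elim: n => [|n IH] u v g.
  by case: u => [|//]; case: v => [|//] _.
case/lastP: u => [|u x]; first by rewrite sh_nil_l sh_nil_r.
case/lastP: v => [|v y]; first by rewrite sh_nil_l sh_nil_r.
rewrite !size_rcons => hs.
case: x hs => hs.
- case: y hs => hs.
  + rewrite !sh_aa !L_rcw !L_cat !L_scale.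
    rewrite (IH (rcons u La) v); last by rewrite ?size_rcons; lia.
    rewrite (IH u (rcons v La)); last by rewrite ?size_rcons; lia.
    rewrite (IH u v); last by lia.
    by rewrite addrCA.
  + rewrite sh_b_r sh_b_l !L_rcw (IH (rcons u La) v) // size_rcons; lia.
- rewrite sh_b_l sh_b_r !L_rcw (IH u (rcons v y)) // size_rcons; lia.
Qed.

Lemma sh_comm u v g : L g (sh_word u v) = L g (sh_word v u).
Proof. exact: (@sh_comm_n (size u + size v)). Qed.

Lemma sh_assoc_n n : forall u v w g, (size u + size v + size w <= n)%N ->
  L (fun x => L g (sh_word x w)) (sh_word u v) = L (fun y => L g (sh_word u y)) (sh_word v w).
Proof.
elim: n => [|n IH] u v w g.
  by case: u => [|//]; case: v => [|//]; case: w => [|//] _; rewrite !sh_nil_l !L1.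
case/lastP: u => [|u x].
  move=> _; rewrite sh_nil_l L1 ev1 mul1r.
  by apply: eq_L => y0; rewrite sh_nil_l L1 ev1 mul1r.
case/lastP: v => [|v y].
  by move=> _; rewrite sh_nil_l sh_nil_r !L1.
case/lastP: w => [|w z].
  move=> _; rewrite sh_nil_r L1 ev1 mul1r.
  by apply: eq_L => y0; rewrite sh_nil_r L1 ev1 mul1r.
rewrite !size_rcons => hs.
case: z hs => hs; last first.
  under eq_L => x0 do rewrite sh_b_r L_rcw.
  rewrite sh_b_r L_rcw.
  under [RHS]eq_L => x0 do rewrite sh_b_r L_rcw.
  by apply: IH; rewrite ?size_rcons; lia.
case: x hs => hs; last first.
  rewrite sh_b_l L_rcw.
  under eq_L => x0 do rewrite sh_b_l L_rcw.
  under [RHS]eq_L => x0 do rewrite sh_b_l L_rcw.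
  by apply: IH; rewrite ?size_rcons; lia.
case: y hs => hs; last first.
  rewrite sh_b_r L_rcw sh_b_l L_rcw.
  under eq_L => x0 do rewrite sh_b_l L_rcw.
  under [RHS]eq_L => x0 do rewrite sh_b_r L_rcw.
  by apply: IH; rewrite ?size_rcons; lia.
set U := rcons u La; set V := rcons v La; set W := rcons w La.
set ga := fun w0 => g (rcons w0 La).
have e1 : L (fun x0 => L ga (sh_word (rcons x0 La) w))
   (sh_word U v ++ sh_word u V ++ hscale 'X (sh_word u v))
   = L (fun y => L ga (sh_word U y)) (sh_word V w).
  by rewrite -IH; [rewrite /U /V sh_aa L_rcw | rewrite /U /V ?size_rcons; lia].
have e2 : L (fun y0 => L ga (sh_word u (rcons y0 La)))
   (sh_word V w ++ sh_word v W ++ hscale 'X (sh_word v w))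
   = L (fun y => L ga (sh_word u y)) (sh_word V W).
  by rewrite [in RHS]/V [in RHS]/W sh_aa L_rcw.
rewrite {1}/U {1}/V sh_aa L_rcw.
under eq_L => x0 do rewrite sh_aa L_rcw !L_cat L_scale.
rewrite !L_add L_scal e1.
rewrite {2}/V {1}/W sh_aa L_rcw.
under [RHS]eq_L => x0 do rewrite {1}/U sh_aa L_rcw !L_cat L_scale -/U.
rewrite !L_add L_scal e2.
rewrite !L_cat !L_scale.
rewrite (IH U v W); last by rewrite /U /W ?size_rcons; lia.
rewrite (IH u V W); last by rewrite /V /W ?size_rcons; lia.
rewrite (IH u v W); last by rewrite /W ?size_rcons; lia.
rewrite (IH U v w); last by rewrite /U ?size_rcons; lia.
rewrite (IH u V w); last by rewrite /V ?size_rcons; lia.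
rewrite (IH u v w); last by lia.
ring.
Qed.

Lemma sh_assoc u v w g :
  L (fun x => L g (sh_word x w)) (sh_word u v) = L (fun y => L g (sh_word u y)) (sh_word v w).
Proof. exact: (@sh_assoc_n (size u + size v + size w)). Qed.

Lemma L_swap (h : word -> word -> R[i]) P Q :
  L (fun u => L (fun v => h u v) Q) P = L (fun v => L (fun u => h u v) P) Q.
Proof.
rewrite /L.
under eq_bigr => t _ do rewrite big_distrr.
rewrite exchange_big /=; apply: eq_bigr => s _.
rewrite big_distrr; apply: eq_bigr => t _ /=; by rewrite mulrCA.
Qed.

Definition th (c : letter) : hpoly :=
  if c is La then [:: (-1, [:: La]); (- 'X, [::])] else [:: (1, [:: Lb])].
Definition theta (w : word) : hpoly := foldr (fun c acc => hmul acc (th c)) hone w.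

Fixpoint OmR (Z : hpoly) (rv : word) : hpoly :=
  match rv with
  | [::] => [::]
  | c :: rv' => OmR (hmul Z (th c)) rv' ++ (if c is Lb then hsh [:: (1, rev rv')] Z else [::])
  end.
Definition OmW Z v := OmR Z (rev v).

Lemma OmW_nil Z : OmW Z [::] = [::]. Proof. by []. Qed.
Lemma OmW_rcons Z v c : OmW Z (rcons v c) =
  OmW (hmul Z (th c)) v ++ (if c is Lb then hsh [:: (1, v)] Z else [::]).
Proof. by rewrite /OmW rev_rcons /= revK. Qed.

Lemma L_tha g Z : L g (hmul Z (th La)) = - L (fun w => g (rcons w La)) Z - ev 'X * L g Z.
Proof.
rewrite L_hmul -L_scal -!L_opp -L_add; apply: eq_L => w.
rewrite L_cons L1 /= !evN ev1 cats1 cats0; ring.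
Qed.
Lemma L_thb g Z : L g (hmul Z (th Lb)) = L (fun w => g (rcons w Lb)) Z.
Proof. by rewrite L_hmul; apply: eq_L => w; rewrite L1 ev1 mul1r cats1. Qed.
Lemma L_hsh1 g y Z : L g (hsh [:: (1, y)] Z) = L (fun z => L g (sh_word y z)) Z.
Proof. by rewrite L_hsh L1 ev1 mul1r. Qed.
Lemma L_hsh1' g y z : L g (hsh [:: (1, y)] [:: (1,z)]) = L g (sh_word y z).
Proof. by rewrite L_hsh1 L1 ev1 mul1r. Qed.

Lemma OmR_lin rv : forall Z g, L g (OmR Z rv) = L (fun z => L g (OmR [:: (1,z)] rv)) Z.
Proof.
elim: rv => [|c rv IH] Z g.
  transitivity (0 : R[i]); first exact: L_nil.
  rewrite -(L_zero Z); apply: eq_L => z; symmetry; exact: L_nil.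
rewrite [OmR Z _]/= L_cat IH.
under [RHS]eq_L => z do rewrite [OmR _ (_ :: _)]/= L_cat IH.
rewrite L_add; congr (_ + _).
  rewrite L_hmul; apply: eq_L => z; by rewrite L_hmul L1 ev1 mul1r.
case: c => /=.
  transitivity (0 : R[i]); first exact: L_nil.
  rewrite -(L_zero Z); apply: eq_L => z; symmetry; exact: L_nil.
by rewrite L_hsh1; apply: eq_L => z; rewrite L_hsh1 L1 ev1 mul1r.
Qed.
Lemma OmW_lin v Z g : L g (OmW Z v) = L (fun z => L g (OmW [:: (1,z)] v)) Z.
Proof. exact: OmR_lin. Qed.

Lemma OmW_rb Z v : OmW Z (rcons v Lb) = OmW (hmul Z (th Lb)) v ++ hsh [:: (1, v)] Z.
Proof. by rewrite OmW_rcons. Qed.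
Lemma OmW_ra Z v : OmW Z (rcons v La) = OmW (hmul Z (th La)) v.
Proof. by rewrite OmW_rcons cats0. Qed.

Definition GIst X Y := forall Z g,
  L (fun v => L g (OmW Z v)) (sh_word X Y) =
  L g (OmW (hsh [:: (1,Y)] Z) X) + L g (OmW (hsh [:: (1,X)] Z) Y).

Lemma GI_sym X Y : GIst X Y -> GIst Y X.
Proof. by move=> H Z g; rewrite sh_comm H addrC. Qed.

Lemma GI_nil Y : GIst [::] Y.
Proof.
move=> Z g; rewrite sh_nil_l L1 ev1 mul1r OmW_nil L_nil add0r.
rewrite (OmW_lin Y Z) (OmW_lin Y (hsh _ _)) L_hsh1.
by apply: eq_L => z; rewrite sh_nil_l L1 ev1 mul1r.
Qed.

Lemma GI_b X Y : GIst X Y -> GIst (rcons X Lb) Y.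
Proof.
move=> H Z g; rewrite sh_b_l L_rcw.
under eq_L => v do rewrite OmW_rb L_cat.
rewrite L_add H OmW_rb L_cat -!addrA; congr (_ + _).
  rewrite !(OmW_lin X) !L_hsh1 L_thb L_thb L_hsh1.
  by apply: eq_L => w; rewrite sh_b_r L_rcw.
rewrite addrC; congr (_ + _).
  under eq_L => v do rewrite L_hsh1.
  rewrite L_swap !L_hsh1; apply: eq_L => z.
  by rewrite sh_assoc.
rewrite !(OmW_lin Y) !L_hsh1 L_thb.
by apply: eq_L => w; rewrite sh_b_r sh_b_l !L_rcw.
Qed.

Lemma L_sh_aa F y Z : L (fun w => L F (sh_word (rcons y La) (rcons w La))) Z =
  L (fun w => L (fun w0 => F (rcons w0 La)) (sh_word (rcons y La) w)) Z +
  L (fun w => L (fun w0 => F (rcons w0 La)) (sh_word y (rcons w La))) Z +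
  ev 'X * L (fun w => L (fun w0 => F (rcons w0 La)) (sh_word y w)) Z.
Proof.
rewrite -L_scal -!L_add; apply: eq_L => w.
by rewrite sh_aa L_rcw !L_cat L_scale addrA.
Qed.

Lemma SL F y Z :
  L F (hmul (hsh [:: (1,y)] (hmul Z (th La))) (th La)) +
  L F (hsh [:: (1, rcons y La)] (hmul Z (th La))) +
  ev 'X * L F (hsh [:: (1,y)] (hmul Z (th La))) =
  L F (hmul (hsh [:: (1, rcons y La)] Z) (th La)).
Proof.
rewrite !L_tha !L_hsh1 !L_tha.
rewrite L_sh_aa; ring.
Qed.

Lemma GI_aa X Y : GIst (rcons X La) Y -> GIst X (rcons Y La) -> GIst X Y ->
  GIst (rcons X La) (rcons Y La).
Proof.
move=> H1 H2 H3 Z g.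
rewrite sh_aa L_rcw.
under eq_L => v do rewrite OmW_ra.
rewrite !L_cat L_scale H1 H2 H3 !OmW_ra.
rewrite !(OmW_lin X _ g) !(OmW_lin Y _ g).
rewrite -(SL _ Y Z) -(SL _ X Z).
ring.
Qed.

Lemma GI_n n : forall X Y, (size X + size Y <= n)%N -> GIst X Y.
Proof.
elim: n => [|n IH] X Y.
  by case: X => [|//] _; apply: GI_nil.
case/lastP: X => [|X x] hs; first exact: GI_nil.
case/lastP: Y hs => [|Y y] hs; first by apply: GI_sym; apply: GI_nil.
move: hs; rewrite !size_rcons => hs.
case: x hs => hs; last by apply: GI_b; apply: IH; rewrite ?size_rcons; lia.
case: y hs => hs; last by apply: GI_sym; apply: GI_b; apply: IH; rewrite ?size_rcons; lia.
by apply: GI_aa; apply: IH; rewrite ?size_rcons; lia.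
Qed.

Lemma GI X Y : GIst X Y.
Proof. exact: (@GI_n (size X + size Y)). Qed.

Definition heq (P Q : hpoly) := forall g, L g P = L g Q.

Lemma hmulA P Q S : heq (hmul (hmul P Q) S) (hmul P (hmul Q S)).
Proof.
move=> g; rewrite !L_hmul; apply: eq_L => u; rewrite L_hmul; apply: eq_L => v.
by apply: eq_L => w; rewrite catA.
Qed.
Lemma hmul_l P P' Q : heq P P' -> heq (hmul P Q) (hmul P' Q).
Proof. by move=> e g; rewrite !L_hmul e. Qed.
Lemma hmul_r P Q Q' : heq Q Q' -> heq (hmul P Q) (hmul P Q').
Proof. by move=> e g; rewrite !L_hmul; apply: eq_L => u; rewrite e. Qed.
Lemma hmul1 P : heq (hmul P hone) P.
Proof. by move=> g; rewrite L_hmul; apply: eq_L => u; rewrite L_hone cats0. Qed.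
Lemma hmul1l P : heq (hmul hone P) P.
Proof. by move=> g; rewrite L_hmul L_hone. Qed.

Lemma theta_rcons Y c : heq (theta (rcons Y c)) (hmul (th c) (theta Y)).
Proof.
elim: Y => [|x Y IH] /=; first by move=> g; rewrite hmul1 hmul1l.
move=> g; rewrite (hmul_l _ _ _ IH) hmulA.
done.
Qed.

Definition G1 (g : word -> R[i]) := fun v => L g (OmW hone v).

Lemma D0 X Y g : L (G1 g) (sh_word X (rcons Y La)) + L (G1 g) (sh_word (rcons X La) Y)
  + ev 'X * L (G1 g) (sh_word X Y) = 0.
Proof.
rewrite /G1 !GI !OmW_ra !(OmW_lin X _ g) !(OmW_lin Y _ g) !L_tha !L_hsh1 !L_hone.
rewrite !sh_nil_r !L1 ev1 !mul1r.
ring.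
Qed.

Lemma MainId Y : forall P g, L (G1 g) (hsh P [:: (1, Y)]) = L (G1 g) (hmul P (theta Y)).
Proof.
elim/last_ind: Y => [|Y c IH] P g.
  rewrite /theta /= hmul1 L_hsh; apply: eq_L => u.
  by rewrite L1 ev1 mul1r sh_nil_r L1 ev1 mul1r.
rewrite (hmul_r _ _ _ (theta_rcons Y c)) -hmulA -IH.
rewrite !L_hsh; case: c.
  rewrite L_tha -L_scal -!L_opp -L_add; apply: eq_L => u.
  rewrite !L1 ev1 !mul1r.
  move: (D0 u Y g); set A := L _ (sh_word u (rcons Y La)) => e.
  by rewrite -[A]subr0 -e; ring.
rewrite L_thb; apply: eq_L => u.
by rewrite !L1 ev1 !mul1r sh_b_r sh_b_l.
Qed.

Lemma dec_split v : v = nseq (dec v).1 La ++ block_word (dec v).2.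
Proof.
elim: v => [|[] v IH] //=; by rewrite [in LHS]IH.
Qed.
Lemma binitE v : binit v = if v is La :: _ then false else true.
Proof. by case: v => [|[] v]. Qed.
Lemma bw_dec v : binit v -> block_word (dec v).2 = v.
Proof. by rewrite /binit => /eqP e; rewrite {2}(dec_split v) e. Qed.

Lemma hsh_r P Q Q' : heq Q Q' -> heq (hsh P Q) (hsh P Q').
Proof. by move=> e g; rewrite !L_hsh; apply: eq_L => u; rewrite e. Qed.
Lemma OmW_congr Z Z' v : heq Z Z' -> heq (OmW Z v) (OmW Z' v).
Proof. by move=> e g; rewrite !(OmW_lin v) e. Qed.
Lemma heq_trans P Q S : heq P Q -> heq Q S -> heq P S.
Proof. by move=> e1 e2 g; rewrite e1 e2. Qed.
Lemma heq_sym P Q : heq P Q -> heq Q P.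
Proof. by move=> e g; rewrite e. Qed.

Lemma theta_cat u v : heq (theta (u ++ v)) (hmul (theta v) (theta u)).
Proof.
elim: u => [|x u IH] /=; first by move=> g; rewrite hmul1.
apply: heq_trans (hmul_l _ _ _ IH) _; exact: hmulA.
Qed.

Lemma iter_theta k : iter k (fun p => hmul p [:: (-1, [:: La]); (- 'X, [::])]) hone = theta (nseq k La).
Proof. by elim: k => //= k ->. Qed.

Lemma PB ks : heq (hmul (psi_blocks ks) [:: (1, [:: Lb])]) (theta (rcons (block_word ks) Lb)).
Proof.
elim: ks => [|k ks IH] /=; first by move=> g; rewrite hmul1l.
rewrite rcons_cat /psi_block iter_theta.
apply: heq_sym; apply: heq_trans (hmul_l _ _ _ (theta_cat _ _)) _.
apply: heq_trans (hmul_l _ _ _ (hmul_l _ _ _ (heq_sym _ _ IH))) _.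
move=> g; rewrite !L_hmul; apply: eq_L => u; rewrite !L_hmul.
apply: eq_L => v; apply: eq_L => w; by rewrite !catA.
Qed.

Definition PhiZ Z ks := flatten [seq hsh [:: (1, block_word (take i ks))] (hmul Z (psi_blocks (drop i ks)))
   | i <- iota 0 (size ks).+1].

Lemma L_PhiZ g Z ks : L g (PhiZ Z ks) = \sum_(0 <= i < (size ks).+1)
  L g (hsh [:: (1, block_word (take i ks))] (hmul Z (psi_blocks (drop i ks)))).
Proof. by rewrite /PhiZ L_flatten big_map /index_iota subn0. Qed.

Lemma PhiZ_congr Z Z' ks : heq Z Z' -> heq (PhiZ Z ks) (PhiZ Z' ks).
Proof.
move=> e g; rewrite !L_PhiZ; apply: eq_bigr => i _.
by apply: hsh_r; apply: hmul_l.
Qed.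

Lemma psi_rcons l k : heq (psi_blocks (rcons l k)) (hmul (psi_block k) (psi_blocks l)).
Proof.
elim: l => [|x l IH] /=; first by move=> g; rewrite hmul1 hmul1l.
apply: heq_trans (hmul_l _ _ _ IH) _; exact: hmulA.
Qed.

Lemma OmW_as k : forall W V, heq (OmW W (V ++ nseq k La)) (OmW (hmul W (theta (nseq k La))) V).
Proof.
elim: k => [|k IH] W V.
  by rewrite cats0; apply: OmW_congr; apply: heq_sym; apply: hmul1.
rewrite /= -cat_rcons; apply: heq_trans (IH _ _) _.
rewrite OmW_ra; apply: OmW_congr; exact: hmulA.
Qed.

Lemma bw_rcons ks k : block_word (rcons ks k) = block_word ks ++ Lb :: nseq k La.
Proof. by rewrite /block_word map_rcons flatten_rcons. Qed.

Lemma OmPhi ks : forall Z, heq (OmW Z (rcons (block_word ks) Lb)) (PhiZ Z ks).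
Proof.
elim/last_ind: ks => [|ks k IH] Z g.
  have e0 : block_word [::] = [::] by [].
  rewrite L_PhiZ big_nat1 OmW_rb L_cat e0 OmW_nil L_nil add0r.
  by rewrite !L_hsh1 hmul1.
rewrite bw_rcons OmW_rb L_cat -cat_rcons OmW_as IH.
rewrite [in RHS]L_PhiZ size_rcons big_nat_recr //=.
congr (_ + _); last first.
  rewrite take_oversize ?size_rcons // drop_oversize ?size_rcons // bw_rcons -cat_rcons.
  apply: hsh_r; apply: heq_sym; exact: hmul1.
rewrite L_PhiZ; apply: eq_big_nat => i /andP [_ hi].
rewrite -cats1 takel_cat // cats1 drop_rcons //.
apply: hsh_r; apply: heq_sym.
apply: heq_trans (hmul_r _ _ _ (psi_rcons _ _)) _.
apply: heq_trans (heq_sym _ _ (hmulA _ _ _)) _; apply: hmul_l.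
by rewrite /psi_block iter_theta; apply: heq_sym; apply: hmulA.
Qed.

Lemma shr_last U : forall V d, last d U == Lb -> last d V == Lb ->
  all (fun t => last d t.2 == Lb) (shr U V).
Proof.
elim: U => [|x U IHU] V d hU hV; first by rewrite /= hV.
elim: V d hU hV => [|y V IHV] d hU hV; first by rewrite /= hU.
case: x IHV hU => IHV hU.
  case: y hV => hV.
    rewrite shr_aa /hcons all_map /preim /= !all_cat; apply/and3P; split.
    - exact: IHV.
    - exact: IHU.
    - by rewrite /hscale all_map; apply: IHU.
  rewrite shr_b2 /hcons all_map /preim /=; exact: IHV.
rewrite shr_b1 /hcons all_map /preim /=; exact: IHU.
Qed.

Lemma binit_rev w : binit (rev w) = (last Lb w == Lb).
Proof. by case/lastP: w => [|w x] //; rewrite rev_rcons binitE last_rcons; case: x. Qed.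

Definition allb (p : hpoly) := all (fun t : {poly rat} * word => binit t.2) p.

Lemma allb_sh u v : binit u -> binit v -> allb (sh_word u v).
Proof.
move=> hu hv; rewrite sh_wordE /allb /mrev all_map /preim /=.
have := @shr_last (rev u) (rev v) Lb; rewrite -!binit_rev !revK => /(_ hu hv).
by apply: sub_all => t /=; rewrite binit_rev.
Qed.

Lemma all_flat (a : pred ({poly rat} * word)) (s : seq hpoly) : all a (flatten s) = all (all a) s.
Proof. by elim: s => //= p s IH; rewrite all_cat IH. Qed.

Lemma allb_scale c p : allb p -> allb (hscale c p).
Proof. by rewrite /allb /hscale all_map. Qed.

Lemma allb_hsh P Q : allb P -> allb Q -> allb (hsh P Q).
Proof.
move=> /allP hP /allP hQ; rewrite /hsh /allb all_flat all_map; apply/allP => t tP /=.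
rewrite all_flat all_map; apply/allP => t' t'Q /=.
by apply: allb_scale; apply: allb_sh; [apply: hP | apply: hQ].
Qed.

Lemma binit_cat u v : binit u -> binit v -> binit (u ++ v).
Proof. by case: u => [|[] u]. Qed.

Lemma allb_hmul P Q : allb P -> allb Q -> allb (hmul P Q).
Proof.
move=> /allP hP /allP hQ; rewrite /hmul /allb all_flat all_map; apply/allP => t tP /=.
rewrite all_map; apply/allP => t' t'Q /=.
by apply: binit_cat; [apply: hP | apply: hQ].
Qed.

Lemma allb_psib ks : allb (psi_blocks ks).
Proof.
elim: ks => [|k ks IH] //=; apply: allb_hmul => //.
by rewrite /psi_block /hmul /allb /= cats0 all_map; apply/allP.
Qed.

Lemma allb_psi p : allb (psi p).
Proof.
rewrite /psi /allb all_flat all_map; apply/allP => t _ /=.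
by case: (binit t.2) => //; apply: allb_scale; apply: allb_psib.
Qed.

Lemma L_allb f h p : allb p -> (forall v, binit v -> f v = h v) -> L f p = L h p.
Proof.
move=> /allP hp e; rewrite /L !big_seq; apply: eq_bigr => t tp.
by rewrite e //; apply: hp.
Qed.

Lemma L_wS g p : L g (wS p) = L (fun v => if binit v then L g (wS_blocks (dec v).2) else 0) p.
Proof.
rewrite /wS L_flatten big_map; apply: eq_bigr => t _.
by case: (binit t.2); rewrite ?L_scale ?L_nil ?mulr0.
Qed.
Lemma L_psi g p : L g (psi p) = L (fun v => if binit v then L g (psi_blocks (dec v).2) else 0) p.
Proof.
rewrite /psi L_flatten big_map; apply: eq_bigr => t _.
by case: (binit t.2); rewrite ?L_scale ?L_nil ?mulr0.
Qed.

Lemma wS_Phi ks : heq (wS_blocks ks) (PhiZ hone ks).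
Proof.
move=> g; rewrite L_PhiZ /wS_blocks L_flatten big_map /index_iota subn0.
apply: eq_bigr => i _; apply: hsh_r; apply: heq_sym; exact: hmul1l.
Qed.

Lemma wS_Om p g : allb p -> L g (wS p) = L (G1 g) (rcw Lb p).
Proof.
move=> hp; rewrite L_wS L_rcw; apply: L_allb => // v hv.
rewrite hv /G1 wS_Phi -OmPhi bw_dec //.
Qed.

Lemma MainP P Q g : L (G1 g) (hsh P Q) =
  L (G1 g) (hmul P (flatten [seq hscale t.1 (theta t.2) | t <- Q])).
Proof.
rewrite L_hsh L_swap L_hmul.
under [RHS]eq_L => u do rewrite L_flatten big_map.
have -> : L (fun u => \sum_(t <- Q) L (fun v => G1 g (u ++ v)) (hscale t.1 (theta t.2))) P
  = L (fun v => L (fun u => L (fun x => G1 g (u ++ x)) (theta v)) P) Q.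
  rewrite -L_swap; apply: eq_L => u; rewrite /L; apply: eq_bigr => t _.
  exact: (L_scale (fun x => G1 g (u ++ x)) t.1 (theta t.2)).
apply: eq_L => v.
have := MainId v P g; rewrite L_hsh L_hmul => <-.
by apply: eq_L => u; rewrite L1 ev1 mul1r.
Qed.

Lemma final (M : nat) w w' : inCA w -> inCA w' ->
  ZSsh q M (hsh w w') = ZSsh q M (hmul w (psi w')).
Proof.
move=> hw hw'.
have aw : allb w by apply: sub_all hw => t /andP [].
have aw' : allb w' by apply: sub_all hw' => t /andP [].
set gZ := fun v => if binit v then ((1 - q) ^+ n0 v)^-1 * ZA q M (map toA (dec v).2) else 0.
have ZqL p : Zq q M p = L gZ p.
  rewrite /Zq /L; apply: eq_bigr => t _; rewrite /gZ.
  by case: (binit t.2); rewrite ?mulr0 // mulrA.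
rewrite /ZSsh !ZqL wS_Om; last by apply: allb_hsh.
rewrite wS_Om; last by apply: allb_hmul => //; apply: allb_psi.
have -> : L (G1 gZ) (rcw Lb (hsh w w')) = L (G1 gZ) (hsh w (rcw Lb w')).
  rewrite L_rcw !L_hsh; apply: eq_L => u; rewrite L_rcw; apply: eq_L => v.
  by rewrite sh_b_r L_rcw.
rewrite MainP !L_rcw !L_hmul; apply: eq_L => u.
rewrite L_flatten big_map L_psi.
transitivity (\sum_(t <- w') ev t.1 * (if binit t.2 then
   L (fun v0 => G1 gZ (rcons (u ++ v0) Lb)) (psi_blocks (dec t.2).2) else 0)); last by [].
rewrite /rcw big_map !big_seq; apply: eq_bigr => t tw.
have bt : binit t.2 by move/allP: aw' => /(_ t tw).
rewrite bt L_scale; congr (_ * _) => /=.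
rewrite -{1}(bw_dec _ bt) -PB L_hmul; apply: eq_L => x.
by rewrite L1 ev1 mul1r cats1 rcons_cat.
Qed.

End Main.

Theorem proposition4p2 (R : realType) (q : R[i]) (hq : 0 < `|q| < 1)
  (M : nat) (hM : (1 <= M)%N) (w w' : hpoly) :
  inCA w -> inCA w' ->
  ZSsh q M (hsh w w') = ZSsh q M (hmul w (psi w')).
Proof.
move=> hw hw'; exact: final.
Qed.
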